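(* Let $1<p\le2$ and let $X$ be a real normed space of type $p$ with type $p$ constant $T_p(X)$. Let $A\subseteq X$ be approximately convex, $D=\operatorname{diam}(A)$, and $d=\mathcal{H}(A,\operatorname{Co}(A))$. If $d\ge2$, then $$D\ge\frac{8^{1/p}}{16\,T_p(X)}\,(2^d)^{(p-1)/p}$$ (with the right-hand side interpreted as $+\infty$ if $d=+\infty$).
   Context: $X$ has type $p$ if there is a constant $T_p(X)$ such that $\bigl(\mathbb{E}\|\sum_{i=1}^n\varepsilon_ix_i\|^p\bigr)^{1/p}\le T_p(X)\bigl(\sum_{i=1}^n\|x_i\|^p\bigr)^{1/p}$ for all $n$ and $x_1,\dots,x_n\in X$, where $(\varepsilon_i)$ are independent random signs with $P(\varepsilon_i=1)=P(\varepsilon_i=-1)=1/2$. A set $A$ is approximately convex if $d(tx+(1-t)y,A)\le1$ for all $x,y\in A$, $t\in[0,1]$, where $d(x,A)=\inf_{a\in A}\|x-a\|$. $\mathcal{H}$ is the Hausdorff distance, $\operatorname{Co}$ the convex hull, $\operatorname{diam}(A)=\sup\{\|x-y\|:x,y\in A\}$. *)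

(* Defs.v *)
From HB Require Import structures.
From mathcomp Require Import all_boot all_order all_algebra.
From mathcomp Require Import all_classical all_reals all_analysis.
Set Implicit Arguments. Unset Strict Implicit. Unset Printing Implicit Defensive.
Import Order.TTheory GRing.Theory Num.Theory.
Import numFieldNormedType.Exports.
Local Open Scope classical_set_scope.
Local Open Scope ring_scope.

Section Defs.
Variables (R : realType) (X : normedModType R).

(* Rademacher average: (E || sum_i eps_i x_i ||^p)^(1/p), the expectation being
   the uniform average over all 2^n sign vectors. *)
Definition rademacher_avg (p : R) (n : nat) (x : 'I_n -> X) : R :=
  ((2 ^+ n)^-1 * \sum_(eps : {ffun 'I_n -> bool})
      `| \sum_(i < n) ((if eps i then 1 else -1) : R) *: x i | `^ p) `^ (p^-1).

Definition type_constant (p T : R) : Prop :=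
  forall (n : nat) (x : 'I_n -> X),
    rademacher_avg p x <= T * (\sum_(i < n) `| x i | `^ p) `^ (p^-1).

Definition edist (x : X) (A : set X) : \bar R :=
  ereal_inf [set (`| x - a |)%:E | a in A].

Definition approx_convex (A : set X) : Prop :=
  forall x y t, A x -> A y -> 0 <= t <= 1 ->
    (edist (t *: x + (1 - t) *: y)%R A <= 1%:E)%E.

Definition conv_hull (A : set X) : set X :=
  [set c | exists (n : nat) (x : 'I_n -> X) (l : 'I_n -> R),
     [/\ (forall i, A (x i)), (forall i, 0 <= l i), \sum_(i < n) l i = 1
       & c = \sum_(i < n) l i *: x i]].

Definition hausdorff (A B : set X) : \bar R :=
  maxe (ereal_sup [set edist a B | a in A]) (ereal_sup [set edist b A | b in B]).

Definition diam (A : set X) : \bar R :=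
  ereal_sup [set (`| z.1 - z.2 |)%:E | z in A `*` A].

End Defs.

(* Main.v *)
Require Import Defs.
From HB Require Import structures.
From mathcomp Require Import all_boot all_order all_algebra.
From mathcomp Require Import all_classical all_reals all_analysis.
From mathcomp Require Import ring lra.
Set Implicit Arguments. Unset Strict Implicit. Unset Printing Implicit Defensive.
Import Order.TTheory GRing.Theory Num.Theory.
Import numFieldNormedType.Exports.
Local Open Scope classical_set_scope.
Local Open Scope ring_scope.


Section J.
Context {R : realType}.

Lemma jensen2 (p t x y : R) : 1 <= p -> 0 <= t -> t <= 1 -> 0 <= x -> 0 <= y ->
  (t * x + (1 - t) * y) `^ p <= t * x `^ p + (1 - t) * y `^ p.
Proof.
move=> p1 t0 t1 x0 y0.
have := @convex_powR R p p1 (Itv01 t0 t1) x y.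
rewrite !inE /= !in_itv /= !andbT => /(_ x0 y0).
by rewrite !convRE.
Qed.

Lemma alg1 (S t u b : R) : S + t != 0 ->
  u * S + t * b = (S + t) * (S / (S + t) * u + (1 - S / (S + t)) * b).
Proof. by move=> h; field. Qed.

Lemma alg2 (S t u b : R) : S + t != 0 ->
  (S + t) * (S / (S + t) * u + (1 - S / (S + t)) * b) = S * u + t * b.
Proof. by move=> h; field. Qed.

Lemma jensen_gen (p : R) n (w a : 'I_n -> R) : 1 <= p ->
  (forall i, 0 <= w i) -> (forall i, 0 <= a i) ->
  (\sum_i w i * a i) `^ p <= (\sum_i w i) `^ (p - 1) * \sum_i w i * a i `^ p.
Proof.
move=> p1; have p0 : 0 < p by apply: lt_le_trans p1.
elim: n w a => [|n IH] w a w0 a0.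
  by rewrite !big_ord0 mulr0 powR0 // gt_eqF.
rewrite !big_ord_recr /=.
set S := \sum_(i < n) w (widen_ord _ i).
set A := \sum_(i < n) w (widen_ord _ i) * a (widen_ord _ i).
set B := \sum_(i < n) w (widen_ord _ i) * a (widen_ord _ i) `^ p.
set t := w ord_max; set b := a ord_max.
have IH' : A `^ p <= S `^ (p - 1) * B.
  exact: (IH (fun i => w (widen_ord (leqnSn n) i)) (fun i => a (widen_ord (leqnSn n) i))).
have S0 : 0 <= S by apply: sumr_ge0.
have t0 : 0 <= t := w0 _.
have b0 : 0 <= b := a0 _.
have A0 : 0 <= A by apply: sumr_ge0 => i _; apply: mulr_ge0.
have B0 : 0 <= B by apply: sumr_ge0 => i _; apply: mulr_ge0 => //; apply: powR_ge0.
have [S_eq0|S_gt0] := eqVneq S 0.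
  have wz : forall i : 'I_n, w (widen_ord (leqnSn n) i) = 0.
    by move=> i; apply: (psumr_eq0P _ S_eq0) => // j _.
  have -> : A = 0 by rewrite /A big1 // => i _; rewrite wz mul0r.
  have -> : B = 0 by rewrite /B big1 // => i _; rewrite wz mul0r.
  rewrite S_eq0 !add0r powRM // mulrA (mulrC _ t) mulr_powRB1 //.
have Sp : 0 < S by rewrite lt_neqAle eq_sym S_gt0 S0.
set u := A / S.
have u0 : 0 <= u by rewrite /u divr_ge0.
have hA : A = u * S by rewrite /u divfK // gt_eqF.
have hu : S * u `^ p <= B.
  have Spm : 0 < S `^ (p - 1) by apply: powR_gt0.
  rewrite -(ler_pM2l Spm) mulrA (mulrC _ S) mulr_powRB1 // mulrC -powRM //.
  by rewrite -hA.
set s := S + t.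
have sp : 0 < s by rewrite /s ltr_wpDr.
have ht : A + t * b = s * (S / s * u + (1 - S / s) * b).
  by rewrite hA /s alg1 // gt_eqF.
have th0 : 0 <= S / s by rewrite divr_ge0 // ltW.
have th1 : S / s <= 1 by rewrite ler_pdivrMr // mul1r /s lerDl.
rewrite ht powRM; [|exact: ltW|by rewrite addr_ge0 // mulr_ge0 // subr_ge0].
have J := jensen2 p1 th0 th1 u0 b0. apply: (le_trans (ler_wpM2l (powR_ge0 s p) J)).
rewrite -(mulr_powRB1 (ltW sp) p0).
have -> : s * s `^ (p - 1) * (S / s * u `^ p + (1 - S / s) * b `^ p)
   = s `^ (p - 1) * (S * u `^ p + t * b `^ p).
  by rewrite [s * s `^ _]mulrC -[s `^ _ * s * _]mulrA /s alg2 // gt_eqF.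
by rewrite (ler_pM2l (powR_gt0 _ sp)) lerD2r.
Qed.

Lemma jensen (p : R) n (w a : 'I_n -> R) : 1 <= p ->
  (forall i, 0 <= w i) -> (forall i, 0 <= a i) -> \sum_i w i = 1 ->
  (\sum_i w i * a i) `^ p <= \sum_i w i * a i `^ p.
Proof.
move=> p1 w0 a0 w1; have := jensen_gen p1 w0 a0.
by rewrite w1 powR1 mul1r.
Qed.
End J.

Section D.
Context {R : realType} {X : normedModType R}.
Implicit Types (A : set X) (x y : X).

Lemma edist_ub x A a : A a -> (Defs.edist x A <= (`|x - a|)%:E)%E.
Proof. by move=> Aa; apply: ereal_inf_lbound; exists a. Qed.

Lemma edist_lt x A (r : R) : (Defs.edist x A < r%:E)%E -> exists2 a, A a & `|x - a| < r.
Proof.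
move=> /ereal_inf_lt [y [a Aa <-]]; rewrite lte_fin => h.
by exists a.
Qed.

Lemma edist_near x A (r e : R) : (Defs.edist x A <= r%:E)%E -> 0 < e ->
  exists2 a, A a & `|x - a| < r + e.
Proof.
move=> h e0; apply: edist_lt; apply: (le_lt_trans h).
by rewrite lte_fin ltrDl.
Qed.

Lemma dyadic A : approx_convex A -> forall k (f : nat -> X), (forall i, A (f i)) ->
  (Defs.edist ((2 ^+ k)^-1 *: \sum_(0 <= i < 2 ^ k) f i) A <= (k%:R)%:E)%E.
Proof.
move=> hA; elim=> [|k IH] f Af.
  rewrite expn0 expr0 invr1 scale1r big_nat1.
  by apply: (le_trans (edist_ub _ (Af 0%N))); rewrite subrr normr0.
have eS : (2 ^ k.+1 = 2 ^ k + 2 ^ k)%N by rewrite expnS mul2n addnn.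
rewrite eS (@big_cat_nat _ _ _ (2 ^ k)%N) ?leq_addr //=.
rewrite -{2}(add0n (2 ^ k)%N) big_addn addnK.
set u := (2 ^+ k)^-1 *: \sum_(0 <= i < 2 ^ k) f i.
set v := (2 ^+ k)^-1 *: \sum_(0 <= i < 2 ^ k) f (i + 2 ^ k)%N.
have hu := IH f Af.
have hv := IH (fun i => f (i + 2 ^ k)%N) (fun i => Af _).
rewrite -/u in hu; rewrite -/v in hv.
have -> : (2 ^+ k.+1)^-1 *: (\sum_(0 <= i < 2 ^ k) f i + \sum_(0 <= i < 2 ^ k) f (i + 2 ^ k)%N)
   = 2^-1 *: u + 2^-1 *: v.
  rewrite /u /v !scalerA -scalerDr exprS invfM //.
apply/lee_addgt0Pr => e e0.
have e20 : 0 < e / 3 by rewrite divr_gt0.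
have [a Aa ha] := edist_near hu e20.
have [b Ab hb] := edist_near hv e20.
have h2 : 0 <= (2 : R)^-1 <= 1 by rewrite invr_ge0 ler0n /= invf_le1 // ler1n.
have [c Ac hc] := edist_near (hA a b _ Aa Ab h2) e20.
apply: (le_trans (edist_ub _ Ac)); rewrite -EFinD lee_fin.
set mid := 2^-1 *: a + (1 - 2^-1) *: b.
have -> : 2^-1 *: u + 2^-1 *: v - c = (2^-1 *: u + 2^-1 *: v - mid) + (mid - c).
  by rewrite subrKA.
have -> : 2^-1 *: u + 2^-1 *: v - mid = 2^-1 *: (u - a) + 2^-1 *: (v - b).
  have h1 : (1 - 2^-1 : R) = 2^-1 by field.
  by rewrite /mid h1 !scalerBr opprD addrACA.
apply: (le_trans (ler_normD _ _)).
apply: (le_trans (lerD (ler_normD _ _) (ltW hc))).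
rewrite !normrZ ger0_norm ?invr_ge0 ?ler0n //.
have : 2^-1 * `|u - a| + 2^-1 * `|v - b| <= k%:R + e / 3.
  have : 2^-1 * `|u - a| + 2^-1 * `|v - b| <= 2^-1 * (k%:R + e/3) + 2^-1 * (k%:R + e/3).
    by apply: lerD; apply: ler_wpM2l; rewrite ?invr_ge0 ?ler0n // ltW.
  by move/le_trans; apply; lra.
move=> h; rewrite -natr1.
have : k%:R + e / 3 + (1 + e / 3) <= k%:R + 1 + e by lra.
move=> h3; apply: le_trans (lerD h (lexx (1 + e/3))) _; apply: (le_trans h3); by rewrite mulrSr.
Qed.
End D.

Section M.
Context {R : realType}.
Lemma jensenF (p : R) (I : finType) (w a : I -> R) : 1 <= p ->
  (forall i, 0 <= w i) -> (forall i, 0 <= a i) -> \sum_i w i = 1 ->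
  (\sum_i w i * a i) `^ p <= \sum_i w i * a i `^ p.
Proof.
move=> p1 w0 a0 w1.
have E (F : I -> R) : \sum_i F i = \sum_(k < #|I|) F (enum_val (A:=predT) k).
  by rewrite -(big_enum_val (A:=predT)).
rewrite !E; apply: jensen => //; by rewrite -E.
Qed.
End M.

Section W.
Context {R : realType} {X : normedModType R}.
Variables (n N : nat) (l : 'I_n -> R).
Hypothesis l0 : forall i, 0 <= l i.
Hypothesis l1 : \sum_i l i = 1.

Definition W (Y : {ffun 'I_N -> 'I_n}) : R := \prod_j l (Y j).

Lemma W_ge0 Y : 0 <= W Y.
Proof. by apply: prodr_ge0 => j _. Qed.

Lemma sumW : \sum_Y W Y = 1.
Proof.
rewrite /W -(bigA_distr_bigA (fun (j : 'I_N) (i : 'I_n) => l i)) /=.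
by rewrite big1 // => j _; rewrite l1.
Qed.

Lemma sumW_g (j0 : 'I_N) (g : 'I_n -> R) :
  \sum_Y W Y * g (Y j0) = \sum_i l i * g i.
Proof.
pose F (j : 'I_N) (i : 'I_n) := l i * (if j == j0 then g i else 1).
have -> : \sum_Y W Y * g (Y j0) = \sum_(Y : {ffun 'I_N -> 'I_n}) \prod_j F j (Y j).
  apply: eq_bigr => Y _; rewrite /W /F (bigD1 j0) //= [RHS](bigD1 j0) //= eqxx.
  rewrite mulrAC; congr (_ * _); apply: eq_bigr => j /negbTE ->.
  by rewrite mulr1.
rewrite -bigA_distr_bigA (bigD1 j0) //=.
have -> : \prod_(j < N | j != j0) \sum_i F j i = 1.
  by apply: big1 => j /negbTE jj0; rewrite -l1; apply: eq_bigr => i _; rewrite /F jj0 mulr1.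
by rewrite mulr1; apply: eq_bigr => i _; rewrite /F eqxx.
Qed.

Lemma sumW_x (x : 'I_n -> X) (j0 : 'I_N) :
  \sum_Y W Y *: x (Y j0) = \sum_i l i *: x i.
Proof.
have ex Y : x (Y j0) = \sum_i ((Y j0 == i)%:R : R) *: x i.
  rewrite (bigD1 (Y j0)) //= eqxx scale1r big1 ?addr0 //.
  by move=> i /negbTE; rewrite eq_sym => ->; rewrite scale0r.
under eq_bigr => Y _ do rewrite ex scaler_sumr.
rewrite exchange_big /=; apply: eq_bigr => i _.
under eq_bigr => Y _ do rewrite scalerA.
rewrite -scaler_suml; congr (_ *: _).
have := sumW_g j0 (fun i' => ((i' == i)%:R : R)); rewrite /= => ->.
rewrite (bigD1 i) //= eqxx mulr1 big1 ?addr0 //.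
by move=> i' /negbTE ->; rewrite mulr0.
Qed.

Variables (x : 'I_n -> X) (p T D : R).
Hypothesis p1 : 1 <= p.
Hypothesis T0 : 0 <= T.
Hypothesis hT : type_constant X p T.
Hypothesis D0 : 0 <= D.
Hypothesis hD : forall a b, `|x a - x b| <= D.

Let c := \sum_i l i *: x i.
Let sg (b : bool) : R := if b then 1 else -1.
Let G (Y Y' : {ffun 'I_N -> 'I_n}) := `|\sum_j (x (Y j) - x (Y' j))| `^ p.
Let Ge (e : {ffun 'I_N -> bool}) (Y Y' : {ffun 'I_N -> 'I_n}) :=
  `|\sum_j sg (e j) *: (x (Y j) - x (Y' j))| `^ p.

Lemma step1 Y : \sum_j (x (Y j) - c) =
  \sum_(Y' : {ffun 'I_N -> 'I_n}) W Y' *: \sum_j (x (Y j) - x (Y' j)).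
Proof.
under [RHS]eq_bigr => Y' _ do rewrite sumrB scalerBr.
rewrite sumrB [RHS]sumrB -scaler_suml sumW scale1r; congr (_ - _).
symmetry; under eq_bigr => Y' _ do rewrite scaler_sumr.
rewrite exchange_big /=; apply: eq_bigr => j _.
by rewrite sumW_x.
Qed.

Lemma step2 (Y : {ffun 'I_N -> 'I_n}) : `|\sum_j (x (Y j) - c)| `^ p <= \sum_(Y' : {ffun 'I_N -> 'I_n}) W Y' * G Y Y'.
Proof.
have p0 : 0 <= p by apply: le_trans p1.
rewrite step1.
apply: le_trans (jensenF (w := W) (a := fun Y' => `|\sum_j (x (Y j) - x (Y' j))|) p1 W_ge0 _ sumW) => //.
apply: ge0_ler_powR => //; rewrite ?nnegrE //.
  by apply: sumr_ge0 => i _; apply: mulr_ge0 => //; exact: W_ge0.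
apply: le_trans (ler_norm_sum _ _ _) _.
by apply: ler_sum => Y' _; rewrite normrZ ger0_norm //; exact: W_ge0.
Qed.

Definition mix (e : {ffun 'I_N -> bool}) (Y Y' : {ffun 'I_N -> 'I_n}) : {ffun 'I_N -> 'I_n} :=
  [ffun j => if e j then Y j else Y' j].

Definition swp (e : {ffun 'I_N -> bool}) (P : {ffun 'I_N -> 'I_n} * {ffun 'I_N -> 'I_n}) :=
  (mix e P.1 P.2, mix e P.2 P.1).

Lemma swpK e : involutive (swp e).
Proof.
move=> [Y Y']; rewrite /swp /mix /=; congr (_, _); apply/ffunP => j; rewrite !ffunE;
by case: (e j).
Qed.

Lemma step3 e :
  \sum_(Y : {ffun 'I_N -> 'I_n}) \sum_(Y' : {ffun 'I_N -> 'I_n}) W Y * W Y' * G Y Y' =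
  \sum_(Y : {ffun 'I_N -> 'I_n}) \sum_(Y' : {ffun 'I_N -> 'I_n}) W Y * W Y' * Ge e Y Y'.
Proof.
rewrite !pair_bigA /= (reindex_inj (inv_inj (swpK e))) /=.
apply: eq_bigr => [[Y Y']] _ /=; congr (_ * _).
  rewrite /W -!big_split /=; apply: eq_bigr => j _; rewrite /mix !ffunE.
  by case: (e j) => //; rewrite mulrC.
rewrite /G /Ge; congr (`| _ | `^ p); apply: eq_bigr => j _; rewrite /mix !ffunE /sg.
by case: (e j); rewrite ?scale1r // scaleN1r opprB.
Qed.

Lemma rad_bound (v : 'I_N -> X) : (forall j, `|v j| <= D) ->
  (2 ^+ N)^-1 * \sum_(e : {ffun 'I_N -> bool}) `|\sum_j sg (e j) *: v j| `^ p
    <= T `^ p * (N%:R * D `^ p).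
Proof.
move=> hv.
have p0 : 0 < p by apply: lt_le_trans p1.
set a := _ * _.
have a0 : 0 <= a.
  by apply: mulr_ge0; [rewrite invr_ge0 exprn_ge0 // ler0n | apply: sumr_ge0 => e _; apply: powR_ge0].
have -> : a = rademacher_avg p v `^ p.
  by rewrite /rademacher_avg -/a -powRrM mulVf ?gt_eqF // powRr1.
set S := \sum_(i < N) `|v i| `^ p.
have S0 : 0 <= S by apply: sumr_ge0 => i _; apply: powR_ge0.
apply: le_trans (_ : (T * S `^ p^-1) `^ p <= _).
  apply: ge0_ler_powR.
  - exact: ltW p0.
  - by rewrite nnegrE /rademacher_avg powR_ge0.
  - by rewrite nnegrE mulr_ge0 // powR_ge0.
  - exact: hT.
rewrite powRM // ?powR_ge0 // -powRrM mulVf ?gt_eqF // powRr1 //.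
apply: ler_wpM2l; first exact: powR_ge0.
rewrite /S; apply: le_trans (_ : \sum_(i < N) D `^ p <= _).
  apply: ler_sum => i _; apply: ge0_ler_powR; rewrite ?nnegrE ?(ltW p0) //.
by rewrite sumr_const card_ord mulr_natl.
Qed.

Lemma step4 :
  \sum_(Y : {ffun 'I_N -> 'I_n}) \sum_(Y' : {ffun 'I_N -> 'I_n}) W Y * W Y' * G Y Y'
   <= T `^ p * (N%:R * D `^ p).
Proof.
set Q := \sum_(Y : {ffun 'I_N -> 'I_n}) _.
set K := T `^ p * _.
set c2 := ((2 : R) ^+ N)^-1.
have eQ : Q = c2 * \sum_(e : {ffun 'I_N -> bool}) Q.
  rewrite sumr_const card_ffun card_bool card_ord -mulr_natr mulrCA natrX.
  by rewrite mulVf ?mulr1 // expf_neq0.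
have eQ2 : Q = \sum_(Y : {ffun 'I_N -> 'I_n}) \sum_(Y' : {ffun 'I_N -> 'I_n})
     W Y * W Y' * (c2 * \sum_(e : {ffun 'I_N -> bool}) Ge e Y Y').
  rewrite {1}eQ; under eq_bigr => e _ do rewrite [Q](step3 e).
  rewrite exchange_big mulr_sumr; apply: eq_bigr => Y _.
  rewrite exchange_big mulr_sumr. apply: congr_big => // Y' _.
  by rewrite -mulr_sumr mulrCA.
rewrite eQ2.
apply: le_trans (_ : \sum_(Y : {ffun 'I_N -> 'I_n}) \sum_(Y' : {ffun 'I_N -> 'I_n})
     W Y * W Y' * K <= _).
  apply: ler_sum => Y _; apply: ler_sum => Y' _; apply: ler_wpM2l.
    by apply: mulr_ge0; exact: W_ge0.
  exact: rad_bound.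
under eq_bigr => Y _ do rewrite -mulr_suml -mulr_sumr sumW mulr1.
by rewrite -mulr_suml sumW mul1r.
Qed.

Lemma maurey : exists Y : {ffun 'I_N -> 'I_n},
  `|\sum_j (x (Y j) - c)| `^ p <= T `^ p * (N%:R * D `^ p).
Proof.
have i0 : 'I_n.
  have h := l1; move: h; case: (n) l => [|m] l'; last by move=> _; exact: ord0.
  by rewrite big_ord0 => /eqP; rewrite eq_sym oner_eq0.
pose F (Y : {ffun 'I_N -> 'I_n}) := `|\sum_j (x (Y j) - c)| `^ p.
have [Ym _ Hm] := @Order.TotalTheory.arg_minP _ _ _ [ffun _ => i0] xpredT F isT.
exists Ym; rewrite -/(F Ym).
apply: le_trans step4.
have -> : F Ym = \sum_(Y : {ffun 'I_N -> 'I_n}) W Y * F Ym by rewrite -mulr_suml sumW mul1r.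
apply: le_trans (_ : \sum_(Y : {ffun 'I_N -> 'I_n}) W Y * F Y <= _).
  by apply: ler_sum => Y _; apply: ler_wpM2l; [exact: W_ge0 | exact: Hm].
apply: ler_sum => Y _.
under [X in _ <= X]eq_bigr => Y' _ do rewrite -mulrA.
rewrite -mulr_sumr; apply: ler_wpM2l; first exact: W_ge0.
exact: step2.
Qed.
End W.

Section C.
Context {R : realType} {X : normedModType R}.

Lemma edist_move (x y : X) A (r s : R) : (Defs.edist y A <= r%:E)%E -> `|x - y| <= s ->
  (Defs.edist x A <= (r + s)%:E)%E.
Proof.
move=> hy hxy; apply/lee_addgt0Pr => e e0.
have [a Aa ha] := edist_near hy e0.
apply: (le_trans (edist_ub _ Aa)); rewrite -EFinD lee_fin.
have -> : x - a = (x - y) + (y - a) by rewrite subrKA.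
apply: (le_trans (ler_normD _ _)); have := ltW ha; lra.
Qed.

Lemma core (A : set X) (p T D : R) : approx_convex A -> 1 <= p -> 0 <= T ->
  type_constant X p T -> 0 <= D ->
  (forall a b, A a -> A b -> `|a - b| <= D) -> forall c, conv_hull A c -> forall k : nat,
  (Defs.edist c A <= (k%:R + (T `^ p * ((2 ^ k)%:R * D `^ p)) `^ p^-1 / (2 ^ k)%:R)%:E)%E.
Proof.
move=> hA p1 T0 hT D0 hDA c [n [x [l [Ax l0 l1 ->]]]] k.
have hD : forall a b, `|x a - x b| <= D by move=> a b; apply: hDA.
have p0 : 0 < p by apply: lt_le_trans p1.
have [Y hY] := maurey (2 ^ k) l0 l1 p1 T0 hT D0 hD.
have N0 : (0 < 2 ^ k)%N by rewrite expn_gt0.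
pose j0 : 'I_(2 ^ k) := Ordinal N0.
pose f (i : nat) := x (Y (insubd j0 i)).
have hf := dyadic hA k (f:=f) (fun i => Ax _).
have hs : \sum_(0 <= i < 2 ^ k) f i = \sum_j x (Y j).
  by rewrite big_mkord; apply: eq_bigr => j _; rewrite /f valKd.
rewrite hs in hf.
apply: (edist_move hf).
set K := T `^ p * _.
set S := \sum_j (x (Y j) - \sum_i l i *: x i) in hY.
have e1 : (2 ^+ k)^-1 *: \sum_j x (Y j) - \sum_i l i *: x i = (2 ^+ k)^-1 *: S.
  rewrite /S sumrB scalerBr sumr_const card_ord; congr (_ - _).
  rewrite -[(\sum_i l i *: x i) *+ _]scaler_nat scalerA -natrX mulVf ?scale1r //.
rewrite distrC e1 normrZ ger0_norm; last by rewrite invr_ge0 exprn_ge0.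
rewrite natrX mulrC; apply: ler_wpM2r; first by rewrite invr_ge0 exprn_ge0.
have -> : `|S| = (`|S| `^ p) `^ p^-1 by rewrite -powRrM mulfV ?gt_eqF // powRr1.
apply: ge0_ler_powR => //; rewrite ?nnegrE ?invr_ge0 ?powR_ge0 //; first exact: ltW.
by rewrite /K mulr_ge0 ?powR_ge0 // mulr_ge0 ?ler0n ?powR_ge0.
Qed.
End C.

Section N.
Context {R : realType}.

Lemma two_add (a b : R) : 2 `^ (a + b) = 2 `^ a * 2 `^ b.
Proof. by rewrite powRD //; apply/implyP => _; rewrite pnatr_eq0. Qed.

Lemma two_pos (a : R) : 0 < 2 `^ a.
Proof. by apply: powR_gt0. Qed.

Lemma hE (p T D : R) (k : nat) : 0 < p -> 0 <= T -> 0 <= D ->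
  (T `^ p * ((2 ^ k)%:R * D `^ p)) `^ p^-1 / (2 ^ k)%:R
   = T * D * 2 `^ (- (k%:R * ((p - 1) / p))).
Proof.
move=> p0 T0 D0.
have eN : (2 ^ k)%:R = (2 : R) `^ k%:R by rewrite powR_mulrn // natrX.
rewrite eN (powRM _ (powR_ge0 _ _) (mulr_ge0 (powR_ge0 _ _) (powR_ge0 _ _))).
rewrite (powRM _ (powR_ge0 _ _) (powR_ge0 _ _)) -!powRrM mulfV ?gt_eqF // (powRr1 T0) (powRr1 D0).
have -> : - (k%:R * ((p - 1) / p)) = k%:R * p^-1 + - k%:R by field; rewrite gt_eqF.
rewrite two_add powRN; field.
by rewrite gt_eqF // two_pos.
Qed.

Lemma numeric (p T D d : R) : 1 < p -> 0 < T -> 0 <= D -> 2 <= d ->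
  (forall k : nat, d <= k%:R + T * D * 2 `^ (- (k%:R * ((p - 1) / p)))) ->
  (8 `^ (p^-1) / (16 * T)) * (2 `^ d) `^ ((p - 1) / p) <= D.
Proof.
move=> p1 T0 D0 d2 hk.
set q := (p - 1) / p.
have p0 : 0 < p by apply: lt_trans p1.
have q0 : 0 < q by rewrite /q divr_gt0 // subr_gt0.
have h83 : (2 : R) `^ 3 = 8 by rewrite (@powR_mulrn _ 2 3) // -natrX.
have e8 : (8 : R) `^ p^-1 = 2 `^ (3 * p^-1) by rewrite powRrM h83.
rewrite -powRrM e8 leNgt; apply/negP => hlt.
set m := Num.truncn d.
have hm : m%:R <= d < m.+1%:R by apply: truncn_itv; lra.
have m2 : (2 <= m)%N by rewrite truncn_ge_nat //; lra.
pose k := m.-1.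
have ek : k%:R = m%:R - 1 :> R.
  by rewrite /k; case: (m) m2 => [|m'] // _; rewrite -natr1 /= addrK.
have := hk k; rewrite ek => hdk.
have hk2 : d - 2 < m%:R - 1 by move: hm; rewrite -natr1; lra.
have h1 : 2 `^ (- ((m%:R - 1) * q)) <= 2 `^ (2 * q + - (d * q)).
  apply: ler_powR; first by rewrite ler1n.
  have : (d - 2) * q <= (m%:R - 1) * q by rewrite ler_wpM2r // ltW.
  lra.
have h2 : T * D < 2 `^ (3 * p^-1) / 16 * 2 `^ (d * q).
  move: hlt; rewrite -(ltr_pM2l T0); congr (_ < _); field; by rewrite gt_eqF.
have h3 : 2 `^ (3 * p^-1) / 16 * 2 `^ (d * q) * 2 `^ (2 * q + - (d * q)) <= 2^-1.
  have ebc : (2:R) `^ (d * q) * 2 `^ (2 * q + - (d * q)) = 2 `^ (2 * q).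
    by rewrite -two_add; congr (_ `^ _); lra.
  rewrite -mulrA ebc mulrAC -two_add.
  have : 2 `^ (3 * p^-1 + 2 * q) <= 2 `^ 3.
    apply: ler_powR; first by rewrite ler1n.
    have -> : 3 * p^-1 + 2 * q = 2 + p^-1 by rewrite /q; field; rewrite gt_eqF.
    have : p^-1 <= 1 by rewrite invf_le1 // ltW.
    lra.
  rewrite h83.
  lra.
have E_lt : T * D * 2 `^ (- ((m%:R - 1) * q)) < 2^-1.
  apply: le_lt_trans (_ : T * D * 2 `^ (2 * q + - (d * q)) < _).
    by apply: ler_wpM2l => //; rewrite mulr_ge0 // ltW.
  apply: lt_le_trans h3.
  by rewrite ltr_pM2r ?two_pos.
move: hm; rewrite -natr1; lra.
Qed.
End N.


Section F.
Context {R : realType} {X : normedModType R}.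

Lemma hull_sub (A : set X) a : A a -> conv_hull A a.
Proof.
move=> Aa; exists 1%N, (fun _ => a), (fun _ => 1).
by split => //; rewrite ?big_ord1 ?scale1r.
Qed.

Lemma hull_ne (A : set X) c : conv_hull A c -> exists a, A a.
Proof.
move=> [n [x [l [Ax _ l1 _]]]].
move: x l Ax l1; case: n => [|m] x l Ax l1.
  by move: l1; rewrite big_ord0 => /eqP; rewrite eq_sym oner_eq0.
by exists (x ord0).
Qed.
End F.

Unset Implicit Arguments.
Theorem theorem6p1 (R : realType) (X : normedModType R) (p T : R)
  (A : set X) :
  1 < p -> p <= 2 -> type_constant X p T ->
  approx_convex A ->
  (2%:E <= hausdorff A (conv_hull A))%E ->
  (hausdorff A (conv_hull A) = +oo%E -> diam A = +oo%E) /\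
  (hausdorff A (conv_hull A) \is a fin_num ->
     ((8 `^ (p^-1) / (16 * T)) *
        (2 `^ fine (hausdorff A (conv_hull A))) `^ ((p - 1) / p))%:E
     <= diam A)%E.
Proof.
move=> p1 p2 hT hA h2.
set H := hausdorff A (conv_hull A) in h2 *.
have p0 : 0 < p by apply: lt_trans p1.
have [a0 Aa0] : exists a, A a.
  have [//|hne'] := pselect (exists a, A a).
  have hne : forall a, ~ A a by move=> a Aa; apply: hne'; exists a.
  have : H = -oo%E.
    rewrite /H /hausdorff.
    have -> : ereal_sup [set Defs.edist a (conv_hull A) | a in A] = -oo%E.
      by apply/ereal_sup_ninfty => _ [a Aa <-]; case: (hne a Aa).
    have -> : ereal_sup [set Defs.edist b A | b in conv_hull A] = -oo%E.
      apply/ereal_sup_ninfty => _ [b hb <-].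
      by have [a Aa] := hull_ne hb; case: (hne a Aa).
    by rewrite maxxx.
  by move=> HN; move: h2; rewrite HN.
have diam0 : (0 <= diam A)%E.
  apply: le_ereal_sup_tmp; exists (`|a0 - a0|)%:E; last by rewrite subrr normr0.
  by exists (a0, a0).
case eD : (diam A) => [D | | ]; last first.
- by move: diam0; rewrite eD.
- by split => // _; rewrite leey.
have D0 : 0 <= D by rewrite -lee_fin -eD.
have hDA : forall a b, A a -> A b -> `|a - b| <= D.
  move=> a b Aa Ab; rewrite -lee_fin -eD.
  by apply: ereal_sup_ubound; exists (a, b).
set T' := Num.max T 0.
have T'0 : 0 <= T' by rewrite le_max lexx orbT.
have hT' : type_constant X p T'.
  move=> n x; apply: le_trans (hT n x) _; apply: ler_wpM2r; first exact: powR_ge0.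
  by rewrite le_max lexx.
pose E (k : nat) := (T' `^ p * ((2 ^ k)%:R * D `^ p)) `^ p^-1 / (2 ^ k)%:R.
have E0 : forall k, 0 <= E k by move=> k; rewrite /E divr_ge0 ?powR_ge0 ?ler0n.
have bound : forall k : nat, (H <= (k%:R + E k)%:E)%E.
  move=> k; rewrite /H /hausdorff ge_max; apply/andP; split.
    apply: ge_ereal_sup => _ [a Aa <-].
    apply: le_trans (edist_ub _ (hull_sub Aa)) _.
    by rewrite subrr normr0 lee_fin addr_ge0.
  apply: ge_ereal_sup => _ [b hb <-].
  exact: (core hA (ltW p1) T'0 hT' D0 hDA hb k).
split.
  by move=> Hoo; have := bound 0%N; rewrite Hoo leye_eq.
move=> Hfin.
have Hd : H = (fine H)%:E by rewrite fineK.
set d := fine H in Hd *.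
have d2 : 2 <= d by rewrite -lee_fin -Hd.
rewrite lee_fin.
have [T_le0|T_gt0] := leP T 0.
  apply: le_trans D0.
  apply: mulr_le0_ge0; last exact: powR_ge0.
  apply: mulr_ge0_le0; first exact: powR_ge0.
  by rewrite invr_le0 mulr_ge0_le0.
have eT : T' = T by rewrite /T' max_l // ltW.
apply: numeric => // k.
have := bound k; rewrite Hd lee_fin /E eT hE //; exact: ltW.
Qed.
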